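(* Let $M$ be an object of an abelian category $\mathcal{A}$. Then: (1) $M$ is strongly self-Rickart if and only if $M$ is self-Rickart and weak duo. (2) $M$ is dual strongly self-Rickart if and only if $M$ is dual self-Rickart and weak duo.
   Context: A morphism $f:X\to Y$ is a section if $f'f=1_X$ for some $f'$, a retraction if $ff'=1_Y$ for some $f'$. A monomorphism $k:K\to M$ is fully invariant if for every $h:M\to M$ there is $\alpha:K\to K$ with $hk=k\alpha$; an epimorphism $c:M\to C$ is fully coinvariant if for every $h:M\to M$ there is $\gamma:C\to C$ with $ch=\gamma c$. $M$ is self-Rickart if the kernel of every endomorphism $f:M\to M$ is a section; dual self-Rickart if the cokernel of every endomorphism of $M$ is a retraction; strongly self-Rickart if the kernel of every endomorphism of $M$ is a fully invariant section; dual strongly self-Rickart if the cokernel of every endomorphism of $M$ is a fully coinvariant retraction (equivalently its image is a fully invariant section). $M$ is weak duo if every section $K\to M$ is fully invariant (equivalently every retraction $M\to C$ is fully coinvariant). *)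

(* Defs.v *)
From HB Require Import structures.
From mathcomp Require Import all_boot all_algebra.
Set Implicit Arguments. Unset Strict Implicit. Unset Printing Implicit Defensive.
Import GRing.Theory.
Local Open Scope ring_scope.

(* A preadditive category: hom-sets are abelian groups, composition is
   bilinear.  [comp g f] is  g ∘ f  (first f, then g). *)
Record preadditive := Preadditive {
  Obj : Type;
  Hom : Obj -> Obj -> zmodType;
  idm : forall X, Hom X X;
  comp : forall X Y Z, Hom Y Z -> Hom X Y -> Hom X Z;
  comp_assoc : forall W X Y Z (h : Hom Y Z) (g : Hom X Y) (f : Hom W X),
      comp h (comp g f) = comp (comp h g) f;
  comp_idl : forall X Y (f : Hom X Y), comp (idm Y) f = f;
  comp_idr : forall X Y (f : Hom X Y), comp f (idm X) = f;
  comp_addl : forall X Y Z (g1 g2 : Hom Y Z) (f : Hom X Y),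
      comp (g1 + g2) f = comp g1 f + comp g2 f;
  comp_addr : forall X Y Z (g : Hom Y Z) (f1 f2 : Hom X Y),
      comp g (f1 + f2) = comp g f1 + comp g f2
}.

Arguments idm {C} X : rename.
Arguments comp {C X Y Z} g f : rename.

Section Notions.
Variable C : preadditive.

Definition is_zero_object (Z : Obj C) : Prop :=
  (forall X (f : Hom Z X), f = 0) /\ (forall X (f : Hom X Z), f = 0).

Definition is_biproduct (A B P : Obj C)
  (i1 : Hom A P) (i2 : Hom B P) (p1 : Hom P A) (p2 : Hom P B) : Prop :=
  [/\ comp p1 i1 = idm A, comp p2 i2 = idm B,
      comp p1 i2 = 0, comp p2 i1 = 0 &
      comp i1 p1 + comp i2 p2 = idm P].

Definition mono (X Y : Obj C) (f : Hom X Y) : Prop :=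
  forall W (g h : Hom W X), comp f g = comp f h -> g = h.

Definition epi (X Y : Obj C) (f : Hom X Y) : Prop :=
  forall W (g h : Hom Y W), comp g f = comp h f -> g = h.

Definition is_kernel (X Y K : Obj C) (f : Hom X Y) (k : Hom K X) : Prop :=
  comp f k = 0 /\
  forall W (g : Hom W X), comp f g = 0 ->
    exists u : Hom W K, comp k u = g /\
      forall v : Hom W K, comp k v = g -> v = u.

Definition is_cokernel (X Y Q : Obj C) (f : Hom X Y) (c : Hom Y Q) : Prop :=
  comp c f = 0 /\
  forall W (g : Hom Y W), comp g f = 0 ->
    exists u : Hom Q W, comp u c = g /\
      forall v : Hom Q W, comp v c = g -> v = u.

Definition abelian : Prop :=
  (exists Z, is_zero_object Z) /\
      (forall A B : Obj C, exists P (i1 : Hom A P) (i2 : Hom B P)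
        (p1 : Hom P A) (p2 : Hom P B), is_biproduct i1 i2 p1 p2) /\
      (forall X Y (f : Hom X Y), exists K (k : Hom K X), is_kernel f k) /\
      (forall X Y (f : Hom X Y), exists Q (c : Hom Y Q), is_cokernel f c) /\
      (forall X Y (m : Hom X Y), mono m -> exists Q (g : Hom Y Q), is_kernel g m) /\
      (forall X Y (e : Hom X Y), epi e -> exists K (g : Hom K X), is_cokernel g e).

Definition section (X Y : Obj C) (f : Hom X Y) : Prop :=
  exists f' : Hom Y X, comp f' f = idm X.

Definition retraction (X Y : Obj C) (f : Hom X Y) : Prop :=
  exists f' : Hom Y X, comp f f' = idm Y.

Definition fully_invariant (K M : Obj C) (k : Hom K M) : Prop :=
  mono k /\
  forall h : Hom M M, exists alpha : Hom K K, comp h k = comp k alpha.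

Definition fully_coinvariant (M Q : Obj C) (c : Hom M Q) : Prop :=
  epi c /\
  forall h : Hom M M, exists gamma : Hom Q Q, comp c h = comp gamma c.

Definition self_Rickart (M : Obj C) : Prop :=
  forall (f : Hom M M) K (k : Hom K M), is_kernel f k -> section k.

Definition dual_self_Rickart (M : Obj C) : Prop :=
  forall (f : Hom M M) Q (c : Hom M Q), is_cokernel f c -> retraction c.

Definition strongly_self_Rickart (M : Obj C) : Prop :=
  forall (f : Hom M M) K (k : Hom K M), is_kernel f k ->
    fully_invariant k /\ section k.

Definition dual_strongly_self_Rickart (M : Obj C) : Prop :=
  forall (f : Hom M M) Q (c : Hom M Q), is_cokernel f c ->
    fully_coinvariant c /\ retraction c.

Definition weak_duo (M : Obj C) : Prop :=
  forall K (k : Hom K M), section k -> fully_invariant k.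

End Notions.

(* Main.v *)
Require Import Defs.
From mathcomp Require Import all_boot all_algebra.
Set Implicit Arguments. Unset Strict Implicit. Unset Printing Implicit Defensive.
Import GRing.Theory.
Local Open Scope ring_scope.

Section Aux.
Variable C : preadditive.


Lemma comp0l X Y Z (f : @Defs.Hom C X Y) : Defs.comp (0 : @Defs.Hom C Y Z) f = 0.
Proof.
have H := comp_addl (0 : @Defs.Hom C Y Z) 0 f.
rewrite addr0 in H.
have : Defs.comp (0 : @Defs.Hom C Y Z) f + Defs.comp 0 f - Defs.comp 0 f = Defs.comp 0 f - Defs.comp 0 f
  by rewrite -H.
by rewrite addrK subrr.
Qed.

Lemma comp0r X Y Z (g : @Defs.Hom C Y Z) : Defs.comp g (0 : @Defs.Hom C X Y) = 0.
Proof.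
have H := comp_addr g (0 : @Defs.Hom C X Y) 0.
rewrite addr0 in H.
have : Defs.comp g (0 : @Defs.Hom C X Y) + Defs.comp g 0 - Defs.comp g 0 = Defs.comp g 0 - Defs.comp g 0
  by rewrite -H.
by rewrite addrK subrr.
Qed.

Lemma compNl X Y Z (g : @Defs.Hom C Y Z) (f : @Defs.Hom C X Y) : Defs.comp (- g) f = - Defs.comp g f.
Proof.
apply/eqP; rewrite -subr_eq0 opprK -comp_addl addNr; apply/eqP; exact: comp0l.
Qed.

Lemma compNr X Y Z (g : @Defs.Hom C Y Z) (f : @Defs.Hom C X Y) : Defs.comp g (- f) = - Defs.comp g f.
Proof.
apply/eqP; rewrite -subr_eq0 opprK -comp_addr addNr; apply/eqP; exact: comp0r.
Qed.

Lemma compBl X Y Z (g1 g2 : @Defs.Hom C Y Z) (f : @Defs.Hom C X Y) :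
  Defs.comp (g1 - g2) f = Defs.comp g1 f - Defs.comp g2 f.
Proof. by rewrite comp_addl compNl. Qed.

Lemma compBr X Y Z (g : @Defs.Hom C Y Z) (f1 f2 : @Defs.Hom C X Y) :
  Defs.comp g (f1 - f2) = Defs.comp g f1 - Defs.comp g f2.
Proof. by rewrite comp_addr compNr. Qed.

Lemma section_mono X Y (k : @Defs.Hom C X Y) : section k -> mono k.
Proof.
move=> [k' Hk] W g h E.
by rewrite -(comp_idl g) -(comp_idl h) -Hk -!comp_assoc E.
Qed.

Lemma retraction_epi X Y (c : @Defs.Hom C X Y) : retraction c -> epi c.
Proof.
move=> [c' Hc] W g h E.
by rewrite -(comp_idr g) -(comp_idr h) -Hc !comp_assoc E.
Qed.


Lemma kernel_mono X Y K (f : @Defs.Hom C X Y) (k : @Defs.Hom C K X) : is_kernel f k -> mono k.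
Proof.
move=> [Hfk Hu] W g h E.
have [|u [_ Hv]] := Hu W (Defs.comp k g); first by rewrite comp_assoc Hfk comp0l.
by rewrite (Hv g erefl) (Hv h (esym E)).
Qed.

Lemma section_kernel K M (k : @Defs.Hom C K M) (k' : @Defs.Hom C M K) :
  Defs.comp k' k = idm K -> is_kernel (idm M - Defs.comp k k') k.
Proof.
move=> Hk; split.
  by rewrite compBl comp_idl -comp_assoc Hk comp_idr subrr.
move=> W g Hg; exists (Defs.comp k' g); split.
  have : Defs.comp (idm M - Defs.comp k k') g + Defs.comp (Defs.comp k k') g = g.
    by rewrite compBl comp_idl subrK.
  by rewrite Hg add0r comp_assoc.
move=> v Hv; by rewrite -Hv comp_assoc Hk comp_idl.
Qed.

End Aux.

Theorem corollary2p10 (C : preadditive) (HC : abelian C) (M : Obj C) :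
  (strongly_self_Rickart M <-> self_Rickart M /\ weak_duo M) /\
  (dual_strongly_self_Rickart M <-> dual_self_Rickart M /\ weak_duo M).
Proof.
have [_ [_ [Hker [Hcok _]]]] := HC.
split; split.
- move=> HS; split.
    by move=> f K k Hk; case: (HS f K k Hk).
  move=> K k [k' Hk].
  by case: (HS _ K k (section_kernel Hk)).
- move=> [HS HW] f K k Hk.
  have Hs := HS f K k Hk.
  by split => //; apply: HW.
- move=> HD; split.
    by move=> f Q c Hc; case: (HD f Q c Hc).
  move=> K k [k' Hk]; split; first by apply: section_mono; exists k'.
  move=> h.
  have [Q [c [Hc0 Hcu]]] := Hcok _ _ (Defs.comp k k').
  have [[_ Hinv] _] := HD _ Q c (conj Hc0 Hcu).
  have [g Hg] := Hinv h.
  have Hck : Defs.comp c k = 0.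
    by rewrite -(comp_idr k) -Hk comp_assoc comp_assoc -(comp_assoc c) Hc0 comp0l.
  have [|u [Hu _]] := Hcu M (idm M - Defs.comp k k').
    rewrite compBl comp_idl -comp_assoc (comp_assoc k' k) Hk comp_idl subrr //.
  exists (Defs.comp k' (Defs.comp h k)).
  have E : Defs.comp (idm M - Defs.comp k k') (Defs.comp h k) = 0.
    by rewrite -Hu -comp_assoc (comp_assoc c h) Hg -comp_assoc Hck comp0r comp0r.
  move: E; rewrite compBl comp_idl -comp_assoc => /eqP; rewrite subr_eq0 => /eqP.
  done.
- move=> [HS HW] f Q c Hc.
  have [c' Hr] := HS f Q c Hc.
  split; last by exists c'.
  split; first by apply: retraction_epi; exists c'.
  move=> h.
  exists (Defs.comp c (Defs.comp h c')).
  have [K [j Hj]] := Hker _ _ c.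
  have [Hcj Hju] := Hj.
  have [|u [Hu _]] := Hju M (idm M - Defs.comp c' c).
    by rewrite compBr comp_idr comp_assoc Hr comp_idl subrr.
  have Hjs : section j.
    exists u; apply: (kernel_mono Hj).
    rewrite comp_idr comp_assoc Hu compBl comp_idl -comp_assoc Hcj comp0r subr0 //.
  have [_ Hinv] := HW K j Hjs.
  have [b Hb] := Hinv h.
  have E : Defs.comp c (Defs.comp h (idm M - Defs.comp c' c)) = 0.
    by rewrite -Hu !comp_assoc -(comp_assoc c h j) Hb comp_assoc Hcj comp0l comp0l.
  move: E; rewrite !compBr !comp_idr => /eqP; rewrite subr_eq0 => /eqP.
  by rewrite !comp_assoc.
Qed.
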